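(* Let $c,d\in\mathbb{R}_{>0}$ with $cd\le\frac14$. Consider a sequence of positive reals $z_0,z_1,z_2,\ldots$ with $z_0\le\frac1{2d}$ and $z_{n+1}\le c+dz_n^2$ for all $n\ge0$. Then $z_n\le3c$ for all $n\ge\log_2\frac1{cd}-1$. *)

(* Defs.v *)
From Stdlib Require Import Reals.
Open Scope R_scope.

Definition log2 (x : R) : R := ln x / ln 2.

(* Main.v *)
Require Import Defs.
From Stdlib Require Import Reals.
From Stdlib Require Import Lra Lia.
Open Scope R_scope.

Lemma pow2_lin (m : nat) : (S m <= 2 ^ m)%nat.
Proof. induction m; simpl; lia. Qed.

Theorem lemma4p7 (c d : R) (z : nat -> R)
  (hc : 0 < c) (hd : 0 < d) (hcd : c * d <= 1/4)
  (hzpos : forall n : nat, 0 < z n)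
  (hz0 : z 0%nat <= 1 / (2 * d))
  (hrec : forall n : nat, z (S n) <= c + d * (z n) ^ 2) :
  forall n : nat, INR n >= log2 (1 / (c * d)) - 1 -> z n <= 3 * c.
Proof.
  remember (c * d) as a eqn:Ha.
  assert (ha : 0 < a) by (rewrite Ha; nra).
  remember (1/4 - a) as b eqn:Hb.
  assert (hb0 : 0 <= b) by lra.
  assert (hb1 : b <= 1/4) by lra.
  assert (hstep : forall n, d * z (S n) <= a + (d * z n) ^ 2).
  { intro n. specialize (hrec n). rewrite Ha.
    replace ((d * z n)^2) with (d * (d * z n ^ 2)) by ring. nra. }
  assert (hbpow : forall m, b ^ (2 ^ m) <= b).
  { intro m. pose proof (pow2_lin m).
    destruct (2 ^ m)%nat as [|k] eqn:E; [lia|].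
    simpl. assert (b ^ k <= 1).
    { replace 1 with (1 ^ k) by apply pow1. apply pow_incr; lra. }
    assert (0 <= b ^ k) by (apply pow_le; lra). nra. }
  assert (hinv : forall m, d * z (S m) <= 2 * a + b ^ (2 ^ m)).
  { induction m.
    - simpl. pose proof (hstep 0%nat).
      assert (d * z 0%nat <= 1/2).
      { apply Rmult_le_compat_l with (r := d) in hz0; [|lra].
        replace (d * (1 / (2 * d))) with (1/2) in hz0 by (field; lra). lra. }
      pose proof (hzpos 0%nat).
      assert (0 < d * z 0%nat) by nra.
      nra.
    - pose proof (hstep (S m)).
      pose proof (hzpos (S m)).
      assert (0 < d * z (S m)) by nra.
      pose proof (hbpow m).
      assert (0 <= b ^ (2 ^ m)) by (apply pow_le; lra).
      assert ((d * z (S m)) ^ 2 <= (2 * a + b ^ (2 ^ m)) ^ 2).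
      { apply pow_incr; lra. }
      replace (2 ^ S m)%nat with (2 ^ m * 2)%nat by (simpl; lia).
      rewrite pow_mult.
      nra. }
  intros n hn.
  unfold log2 in hn.
  assert (hln2 : 0 < ln 2) by (rewrite <- ln_1; apply ln_increasing; lra).
  assert (hpow : 1 / a <= 2 ^ (S n)).
  { destruct (Rle_lt_dec (1/a) (2 ^ S n)) as [h|h]; [exact h|].
    exfalso.
    assert (0 < 2 ^ S n) by (apply pow_lt; lra).
    pose proof (ln_increasing _ _ H h).
    rewrite ln_pow in H0 by lra. rewrite S_INR in H0.

    assert (ln (1/a) / ln 2 <= INR n + 1) by lra.
    apply Rmult_le_compat_r with (r := ln 2) in H1; [|lra].
    replace (ln (1 / a) / ln 2 * ln 2) with (ln (1/a)) in H1 by (field; lra).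
    lra. }
  destruct n as [|m].
  - simpl in hpow. exfalso.
    assert (1 <= 2 * a).
    { apply Rmult_le_compat_r with (r := a) in hpow; [|lra].
      replace (1 / a * a) with 1 in hpow by (field; lra). lra. }
    lra.
  - assert (hg : b ^ (2 ^ m) <= a).
    { assert (b ^ (2 ^ m) <= (1/4) ^ (2 ^ m)) by (apply pow_incr; lra).
      replace ((1/4) ^ (2 ^ m)) with ((1/2) ^ (2 * 2 ^ m)) in H
        by (rewrite pow_mult; f_equal; field).
      replace (2 * 2 ^ m)%nat with (2 ^ S m)%nat in H by (simpl; lia).
      assert ((1/2) ^ (2 ^ S m) <= (1/2) ^ (S (S m))).
      { replace (1/2) with (/2) by field. rewrite !pow_inv.
        replace (/ 2 ^ (2 ^ S m)) with (Rinv (2 ^ (2 ^ S m))) by reflexivity.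
        apply Rinv_le_contravar. apply pow_lt; lra.
        apply Rle_pow; [lra|]. apply pow2_lin. }
      assert ((1/2) ^ S (S m) <= a).
      { replace (1/2) with (/2) by field. rewrite pow_inv.
        assert (0 < 2 ^ S (S m)) by (apply pow_lt; lra).
        apply Rmult_le_compat_r with (r := a) in hpow; [|lra].
        replace (1 / a * a) with 1 in hpow by (field; lra).
        apply Rmult_le_reg_l with (r := 2 ^ S (S m)); [lra|].
        rewrite Rinv_r by lra. lra. }
      lra. }
    pose proof (hinv m).
    assert (d * z (S m) <= 3 * a) by lra.
    rewrite Ha in H0.
    apply Rmult_le_reg_l with (r := d); [lra|]. lra.
Qed.
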